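(* Assume Assumption A and that the limiting chain $X_R$ has $\mathfrak n\ge2$ recurrent classes $\mathscr E_1,\dots,\mathscr E_{\mathfrak n}$. Let $\mathscr E=\bigcup_x\mathscr E_x$, $\breve{\mathscr E}_x=\bigcup_{y\ne x}\mathscr E_y$, let $R^{\mathscr E}_N$ be the jump rates of the trace of $\eta^N$ on $\mathscr E$, and define $$\frac1{\gamma_N}=\sum_{x=1}^{\mathfrak n}\sum_{\eta\in\mathscr E_x}\sum_{\xi\in\breve{\mathscr E}_x}R^{\mathscr E}_N(\eta,\xi).$$ Then $\lim_{N\to\infty}\alpha_N/\gamma_N=0$.
   Context: Setting: $E$ is a fixed finite set; for each $N\ge1$, $(\eta^N_t)$ is a continuous-time irreducible Markov chain on $E$ with jump rates $R_N(\eta,\xi)$ and unique invariant probability measure $\mu_N$. For nonempty $F\subset E$ the trace on $F$ is $\eta^F_t=\eta^N_{S_F(t)}$ with $S_F(t)=\sup\{s:\int_0^s\mathbf 1\{\eta^N_r\in F\}dr\le t\}$, an irreducible Markov chain on $F$ with jump rates $R^F_N$. Ordered families: a finite family of sequences of positive reals $(a^r_N)_{N\ge1}$, $r\in\mathfrak R$, is ordered if for all $r\neq s$ the sequence $\arctan(a^r_N/a^s_N)$ converges. Assumption A: (i) for each $\eta\neq\xi$, either $R_N(\eta,\xi)=0$ for all $N$ or $R_N(\eta,\xi)>0$ for all $N$; let $\mathbb B$ be the set of pairs with positive rates. (ii) For every $m\ge1$ the family $\prod_{(\eta,\xi)\in\mathbb B}R_N(\eta,\xi)^{k(\eta,\xi)}$,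 $k:\mathbb B\to\mathbb Z_+$ with $\sum k=m$, is ordered. Limiting chain: $\alpha_N^{-1}=\sum_\eta\sum_{\xi\ne\eta}R_N(\eta,\xi)$; $R(\eta,\xi)=\lim_N\alpha_NR_N(\eta,\xi)\in[0,1]$ (exists under Assumption A); $X_R$ is the Markov chain on $E$ with rates $R$. *)

(* Defs.v *)
From Stdlib Require Import Reals Lra List Relations ClassicalEpsilon Arith.
Open Scope R_scope.

Section FiniteChain.

(* The finite state space E: a type with decidable equality and an
   exhaustive duplicate-free enumeration [el] (supplied in the theorem). *)
Variable E : Type.
Variable Edec : forall x y : E, {x = y} + {x <> y}.
Variable el : list E.

Definition sumE (f : E -> R) : R := fold_right (fun x a => f x + a) 0 el.
Definition prodE (f : E -> R) : R := fold_right (fun x a => f x * a) 1 el.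
Definition sumEn (f : E -> nat) : nat := fold_right (fun x a => (f x + a)%nat) 0%nat el.

Definition offdiag_sum (f : E -> E -> R) : R :=
  sumE (fun x => sumE (fun y => if Edec x y then 0 else f x y)).

Definition alpha (RN : nat -> E -> E -> R) (N : nat) : R := / offdiag_sum (RN N).

(* monomial  prod_{(eta,xi) in B} R_N(eta,xi)^{k(eta,xi)} ; k is represented as a
   function E -> E -> nat vanishing outside B *)
Definition monomial (RN : nat -> E -> E -> R) (k : E -> E -> nat) (N : nat) : R :=
  prodE (fun x => prodE (fun y => if Edec x y then 1 else (RN N x y) ^ (k x y))).

Definition admissible_exponent (RN : nat -> E -> E -> R) (m : nat) (k : E -> E -> nat) : Prop :=
  (forall x y, k x y <> 0%nat -> x <> y /\ (forall N, (1 <= N)%nat -> 0 < RN N x y)) /\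
  sumEn (fun x => sumEn (fun y => if Edec x y then 0%nat else k x y)) = m.

Definition ordered_seqs (a b : nat -> R) : Prop :=
  exists L, Un_cv (fun N => atan (a N / b N)) L.

Definition assumptionA (RN : nat -> E -> E -> R) : Prop :=
  (forall x y, x <> y ->
     (forall N, (1 <= N)%nat -> RN N x y = 0) \/ (forall N, (1 <= N)%nat -> 0 < RN N x y)) /\
  (forall m, (1 <= m)%nat -> forall k k',
     admissible_exponent RN m k -> admissible_exponent RN m k' ->
     ordered_seqs (monomial RN k) (monomial RN k')).

Definition reach (Rt : E -> E -> R) : E -> E -> Prop :=
  clos_refl_trans E (fun a b => a <> b /\ 0 < Rt a b).
Definition irreducible (Rt : E -> E -> R) : Prop := forall a b, reach Rt a b.
Definition communicate (Rt : E -> E -> R) (a b : E) : Prop := reach Rt a b /\ reach Rt b a.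
Definition recurrent_state (Rt : E -> E -> R) (a : E) : Prop :=
  forall b, reach Rt a b -> reach Rt b a.

Definition holding_rate (Rt : E -> E -> R) (x : E) : R :=
  sumE (fun y => if Edec x y then 0 else Rt x y).
Definition jump_prob (Rt : E -> E -> R) (x y : E) : R :=
  if Edec x y then 0 else Rt x y / holding_rate Rt x.

(* probability that the jump chain started at z enters F for the first time at
   step k+1, and does so at xi *)
Fixpoint first_entrance_prob (Rt : E -> E -> R) (F : E -> bool) (k : nat) (z xi : E) : R :=
  match k with
  | O => jump_prob Rt z xi
  | S k' => sumE (fun w => if F w then 0
                           else jump_prob Rt z w * first_entrance_prob Rt F k' w xi)
  end.

Definition lim_seq (u : nat -> R) : R := epsilon (inhabits 0) (fun l => Un_cv u l).

(* P_z[ the jump chain hits F, and first at xi ] *)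
Definition hitting_prob (Rt : E -> E -> R) (F : E -> bool) (z xi : E) : R :=
  lim_seq (sum_f_R0 (fun k => first_entrance_prob Rt F k z xi)).

(* jump rate R^F(eta,xi) of the trace on F, eta <> xi in F:
   lambda(eta) P_eta[ H^+_F < oo, X(H^+_F) = xi ] *)
Definition trace_rate (Rt : E -> E -> R) (F : E -> bool) (eta xi : E) : R :=
  Rt eta xi + sumE (fun z => if F z then 0 else Rt eta z * hitting_prob Rt F z xi).

End FiniteChain.

Definition sum_idx (n : nat) (f : nat -> R) : R :=
  fold_right (fun x a => f x + a) 0 (seq 0 n).
Definition union_cl (n : nat) {E : Type} (Ecl : nat -> E -> bool) (e : E) : bool :=
  existsb (fun x => Ecl x e) (seq 0 n).
Definition union_others (n : nat) {E : Type} (Ecl : nat -> E -> bool) (x : nat) (e : E) : bool :=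
  existsb (fun y => andb (negb (Nat.eqb y x)) (Ecl y e)) (seq 0 n).

Definition inv_gamma {E : Type} (Edec : forall x y : E, {x = y} + {x <> y}) (el : list E)
  (RN : nat -> E -> E -> R) (n : nat) (Ecl : nat -> E -> bool) (N : nat) : R :=
  sum_idx n (fun x =>
    sumE E el (fun eta => if Ecl x eta then
      sumE E el (fun xi => if union_others n Ecl x xi then
        trace_rate E Edec el (RN N) (union_cl n Ecl) eta xi else 0) else 0)).

(* Main.v *)
Require Import Defs.
From Stdlib Require Import Reals List Relations Arith ClassicalEpsilon Lra Lia.
Open Scope R_scope.

Lemma sumE_ext (A : Type) (l : list A) f g :
  (forall x, f x = g x) -> sumE A l f = sumE A l g.
Proof. intros H; unfold sumE; induction l; simpl; [reflexivity| rewrite IHl, H; reflexivity]. Qed.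

Lemma sumE_plus (A : Type) (l : list A) f g :
  sumE A l f + sumE A l g = sumE A l (fun x => f x + g x).
Proof. unfold sumE; induction l; simpl; [ring| rewrite <- IHl; ring]. Qed.

Lemma sumE_mulr (A : Type) (l : list A) f c :
  sumE A l f * c = sumE A l (fun x => f x * c).
Proof. unfold sumE; induction l; simpl; [ring| rewrite <- IHl; ring]. Qed.

Lemma sumE_mull (A : Type) (l : list A) f c :
  c * sumE A l f = sumE A l (fun x => c * f x).
Proof. unfold sumE; induction l; simpl; [ring| rewrite <- IHl; ring]. Qed.

Lemma sumE_nonneg (A : Type) (l : list A) f :
  (forall x, 0 <= f x) -> 0 <= sumE A l f.
Proof. intros H; unfold sumE; induction l; simpl; [lra| specialize (H a); lra]. Qed.

Lemma sumE_le (A : Type) (l : list A) f g :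
  (forall x, f x <= g x) -> sumE A l f <= sumE A l g.
Proof. intros H; unfold sumE; induction l; simpl; [lra| specialize (H a); lra]. Qed.

Lemma sumE_term (A : Type) (l : list A) f y :
  (forall x, 0 <= f x) -> In y l -> f y <= sumE A l f.
Proof.
  intros H Hy; induction l; simpl in *; [contradiction|].
  destruct Hy as [<-|Hy].
  - pose proof (sumE_nonneg A l f H). unfold sumE in *. lra.
  - specialize (IHl Hy). pose proof (H a). unfold sumE in *. lra.
Qed.

Lemma Rinv_nonneg x : 0 <= x -> 0 <= / x.
Proof.
  intros H; destruct (Req_dec x 0) as [->|n]; [rewrite Rinv_0; lra|].
  left; apply Rinv_0_lt_compat; lra.
Qed.

Lemma Un_cv_ext u v l : (forall N, u N = v N) -> Un_cv u l -> Un_cv v l.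
Proof. intros H C eps He; destruct (C eps He) as [N HN]; exists N; intros m Hm; rewrite <- H; auto. Qed.

Lemma cv_const0 : Un_cv (fun _ => 0) 0.
Proof. intros eps He; exists 0%nat; intros; unfold R_dist; rewrite Rminus_0_r, Rabs_R0; lra. Qed.

Lemma cv_mult_bounded u v M :
  Un_cv u 0 -> (forall N, (1 <= N)%nat -> Rabs (v N) <= M) ->
  Un_cv (fun N => u N * v N) 0.
Proof.
  intros C B eps He.
  assert (HM : 0 <= M) by (specialize (B 1%nat (le_n _)); pose proof (Rabs_pos (v 1%nat)); lra).
  assert (He' : 0 < eps / (M + 1)) by (apply Rdiv_lt_0_compat; lra).
  destruct (C _ He') as [N HN]. exists (max N 1). intros m Hm.
  specialize (HN m ltac:(lia)). specialize (B m ltac:(lia)).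
  unfold R_dist in *. rewrite Rminus_0_r in *. rewrite Rabs_mult.
  assert (Hx : Rabs (u m) * (M + 1) < eps).
  { apply (Rmult_lt_compat_r (M+1)) in HN; [|lra].
    unfold Rdiv in HN. rewrite Rmult_assoc, Rinv_l in HN by lra. lra. }
  pose proof (Rabs_pos (u m)). pose proof (Rabs_pos (v m)).
  assert (Rabs (u m) * Rabs (v m) <= Rabs (u m) * (M+1)) by (apply Rmult_le_compat_l; lra).
  lra.
Qed.

Lemma CV_plus0 a b : Un_cv a 0 -> Un_cv b 0 -> Un_cv (fun N => a N + b N) 0.
Proof. intros Ha Hb. pose proof (CV_plus a b 0 0 Ha Hb) as H. rewrite Rplus_0_r in H. exact H. Qed.

Lemma cv_sum_mul (A : Type) (l : list A) (a : nat -> R) (g : nat -> A -> R) :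
  (forall i, In i l -> Un_cv (fun N => a N * g N i) 0) ->
  Un_cv (fun N => a N * sumE A l (g N)) 0.
Proof.
  intros H; induction l.
  - eapply Un_cv_ext; [|exact cv_const0]. intros; unfold sumE; simpl; ring.
  - eapply Un_cv_ext.
    2:{ rewrite <- (Rplus_0_r 0). apply CV_plus; [apply H; left; auto| apply IHl; intros; apply H; right; auto]. }
    intros N; unfold sumE; simpl; ring.
Qed.

Lemma lim_le_bound u l b N0 : (forall N, (N0 <= N)%nat -> u N <= b) -> Un_cv u l -> l <= b.
Proof.
  intros H C. destruct (Rle_dec l b) as [|n]; auto. exfalso.
  destruct (C (l - b) ltac:(lra)) as [N1 HN]. specialize (HN (max N0 N1) ltac:(lia)).
  specialize (H (max N0 N1) ltac:(lia)). unfold R_dist in HN.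
  apply Rabs_def2 in HN. lra.
Qed.

Lemma lim_ge_bound u l b N0 : (forall N, (N0 <= N)%nat -> b <= u N) -> Un_cv u l -> b <= l.
Proof.
  intros H C. destruct (Rle_dec b l) as [|n]; auto. exfalso.
  destruct (C (b - l) ltac:(lra)) as [N1 HN]. specialize (HN (max N0 N1) ltac:(lia)).
  specialize (H (max N0 N1) ltac:(lia)). unfold R_dist in HN.
  apply Rabs_def2 in HN. lra.
Qed.

Section Hit.
Variable E : Type.
Variable Edec : forall x y : E, {x = y} + {x <> y}.
Variable el : list E.
Hypothesis el_full : forall x, In x el.
Variable Rt : E -> E -> R.
Hypothesis Rt_nn : forall x y, x <> y -> 0 <= Rt x y.
Variable F : E -> bool.
Variable xi : E.
Hypothesis Fxi : F xi = true.

Notation p := (jump_prob E Edec el Rt).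
Notation fe := (first_entrance_prob E Edec el Rt F).

Lemma p_nn z y : 0 <= p z y.
Proof.
  unfold jump_prob. destruct (Edec z y); [lra|].
  apply Rmult_le_pos; [auto|apply Rinv_nonneg].
  unfold holding_rate; apply sumE_nonneg; intros w; destruct (Edec z w); [lra|auto].
Qed.

Lemma p_sum z : sumE E el (fun y => p z y) <= 1.
Proof.
  rewrite (sumE_ext _ _ _ (fun y => (if Edec z y then 0 else Rt z y) * / holding_rate E Edec el Rt z)).
  2:{ intros y; unfold jump_prob; destruct (Edec z y); unfold Rdiv; ring. }
  rewrite <- sumE_mulr. fold (holding_rate E Edec el Rt z).
  destruct (Req_dec (holding_rate E Edec el Rt z) 0) as [->|n].
  - lra.
  - rewrite Rinv_r; lra.
Qed.

Lemma fe_nn k z : 0 <= fe k z xi.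
Proof.
  revert z; induction k; intros z; simpl; [apply p_nn|].
  apply sumE_nonneg; intros w; destruct (F w); [lra|].
  apply Rmult_le_pos; [apply p_nn|apply IHk].
Qed.

Definition Ssum K z := sum_f_R0 (fun k => fe k z xi) K.

Lemma S_rec K z : Ssum (S K) z = p z xi + sumE E el (fun w => if F w then 0 else p z w * Ssum K w).
Proof.
  revert z; induction K; intros z.
  - unfold Ssum; simpl. f_equal.
  - unfold Ssum in *. change (sum_f_R0 (fun k => fe k z xi) (S (S K))) with
      (sum_f_R0 (fun k => fe k z xi) (S K) + fe (S (S K)) z xi).
    rewrite IHK. simpl (fe (S (S K)) z xi). rewrite Rplus_assoc, sumE_plus. f_equal.
    apply sumE_ext; intros w; destruct (F w); [ring|]. simpl. ring.
Qed.

Lemma p_split z : p z xi + sumE E el (fun w => if F w then 0 else p z w) <= 1.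
Proof.
  eapply Rle_trans; [|apply (p_sum z)].
  rewrite (sumE_ext _ _ (fun y => p z y) (fun y => (if F y then p z y else 0) + (if F y then 0 else p z y))).
  2:{ intros y; destruct (F y); ring. }
  rewrite <- sumE_plus. apply Rplus_le_compat_r.
  pose proof (sumE_term E el (fun y => if F y then p z y else 0) xi) as T.
  simpl in T. rewrite Fxi in T. apply T; auto.
  intros x; destruct (F x); [apply p_nn|lra].
Qed.

Lemma S_bound K z : 0 <= Ssum K z <= 1.
Proof.
  split.
  - unfold Ssum; induction K; simpl; [exact (fe_nn 0 z)|]. apply Rplus_le_le_0_compat; [exact IHK|exact (fe_nn (S K) z)].
  - revert z; induction K; intros z.
    + unfold Ssum; simpl. pose proof (p_split z).
      pose proof (sumE_nonneg E el (fun w => if F w then 0 else p z w)) as T.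
      assert (0 <= sumE E el (fun w => if F w then 0 else p z w)).
      { apply T; intros w; destruct (F w); [lra|apply p_nn]. }
      lra.
    + rewrite S_rec. eapply Rle_trans; [|apply (p_split z)]. apply Rplus_le_compat_l.
      apply sumE_le; intros w; destruct (F w); [lra|].
      pose proof (IHK w). pose proof (p_nn z w).
      rewrite <- (Rmult_1_r (p z w)) at 2. apply Rmult_le_compat_l; lra.
Qed.

Lemma hit_bound z : Rabs (hitting_prob E Edec el Rt F z xi) <= 1.
Proof.
  unfold hitting_prob, lim_seq.
  set (P := fun l => Un_cv (sum_f_R0 (fun k => fe k z xi)) l).
  assert (Hex : exists l, P l).
  { destruct (growing_cv (fun K => Ssum K z)) as [l Hl].
    - intros K. unfold Ssum. change (sum_f_R0 (fun k => fe k z xi) (S K)) with (sum_f_R0 (fun k => fe k z xi) K + fe (S K) z xi). pose proof (fe_nn (S K) z). lra.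
    - exists 1. intros x [K ->]. apply S_bound.
    - exists l; exact Hl. }
  pose proof (epsilon_spec (inhabits 0%R) P Hex) as Hs.
  set (h := epsilon (inhabits 0) P) in *.
  apply Rabs_le; split.
  - apply (lim_ge_bound _ _ _ 0 (fun K _ => ltac:(apply (S_bound K z))) ) in Hs. lra.
  - apply (lim_le_bound _ _ _ 0 (fun K _ => ltac:(apply (S_bound K z))) ) in Hs. lra.
Qed.

End Hit.

Theorem mainTheorem14
  (E : Type) (Edec : forall x y : E, {x = y} + {x <> y})
  (el : list E) (el_nodup : NoDup el) (el_full : forall x : E, In x el)
  (RN : nat -> E -> E -> R)
  (HA : assumptionA E Edec el RN)
  (Hirr : forall N, (1 <= N)%nat -> irreducible E (RN N))
  (Rlim : E -> E -> R)
  (HRlim : forall x y, x <> y ->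
     Un_cv (fun N => alpha E Edec el RN N * RN N x y) (Rlim x y))
  (n : nat) (Hn : (2 <= n)%nat) (Ecl : nat -> E -> bool)
  (Hcl : forall x, (x < n)%nat -> exists e0, recurrent_state E Rlim e0 /\
           forall e, Ecl x e = true <-> communicate E Rlim e0 e)
  (Hdisj : forall x y e, (x < n)%nat -> (y < n)%nat -> x <> y ->
           Ecl x e = true -> Ecl y e = false)
  (Hcover : forall e, recurrent_state E Rlim e ->
           exists x, (x < n)%nat /\ Ecl x e = true) :
  Un_cv (fun N => alpha E Edec el RN N * inv_gamma Edec el RN n Ecl N) 0.
Proof.
  destruct HA as [HA1 _].
  assert (Rnn : forall N, (1 <= N)%nat -> forall x y, x <> y -> 0 <= RN N x y).
  { intros N HN x y Hxy. destruct (HA1 x y Hxy) as [H|H]; specialize (H N HN); lra. }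
  assert (Rlim_nn : forall x y, x <> y -> 0 <= Rlim x y).
  { intros x y Hxy. eapply (lim_ge_bound _ _ _ 1); [|exact (HRlim x y Hxy)]; simpl.
    intros N HN. apply Rmult_le_pos; [|apply Rnn; auto].
    unfold alpha; apply Rinv_nonneg; unfold offdiag_sum.
    apply sumE_nonneg; intros a; apply sumE_nonneg; intros b.
    destruct (Edec a b); [lra|apply Rnn; auto]. }
  assert (closed : forall x eta xi, (x < n)%nat -> Ecl x eta = true -> eta <> xi ->
            Ecl x xi = false -> Rlim eta xi = 0).
  { intros x eta xi Hx He Hne Hxi.
    destruct (Rlim_nn eta xi Hne) as [Hp|Hz]; [|auto].
    exfalso. destruct (Hcl x Hx) as [e0 [Hrec Hiff]].
    apply Hiff in He. destruct He as [H1 H2].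
    assert (Ecl x xi = true); [|congruence].
    apply Hiff. assert (R1 : reach E Rlim e0 xi).
    { eapply rt_trans; [exact H1|]. apply rt_step; auto. }
    split; auto. }
  assert (K0 : forall (a : nat -> R), Un_cv (fun N => a N * 0) 0).
  { intros a; eapply Un_cv_ext; [|exact cv_const0]; intros; simpl; ring. }
  unfold inv_gamma, sum_idx.
  apply (cv_sum_mul nat (seq 0 n)). intros x Hx. apply in_seq in Hx.
  assert (Hxn : (x < n)%nat) by lia.
  apply cv_sum_mul; intros eta _. destruct (Ecl x eta) eqn:He; [|apply K0].
  apply cv_sum_mul; intros xi _. destruct (union_others n Ecl x xi) eqn:Hu; [|apply K0].
  unfold union_others in Hu. apply existsb_exists in Hu.
  destruct Hu as [y [Hy Hy2]]. apply in_seq in Hy.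
  apply andb_prop in Hy2. destruct Hy2 as [Hy2 Hy3].
  apply Bool.negb_true_iff in Hy2. apply Nat.eqb_neq in Hy2.
  assert (Hxi : Ecl x xi = false) by (apply (Hdisj y x xi); auto; lia).
  assert (Hne : eta <> xi) by (intros ->; congruence).
  assert (HF : union_cl n Ecl xi = true).
  { unfold union_cl. apply existsb_exists. exists y; split; auto. apply in_seq; lia. }
  unfold trace_rate.
  eapply Un_cv_ext; [intros N; symmetry; apply Rmult_plus_distr_l|].
  apply CV_plus0.
  - rewrite <- (closed x eta xi); auto.
  - apply cv_sum_mul; intros z _. destruct (union_cl n Ecl z) eqn:Hz; [apply K0|].
    assert (Hzx : Ecl x z = false).
    { destruct (Ecl x z) eqn:E1; auto. exfalso.
      assert (union_cl n Ecl z = true); [|congruence].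
      unfold union_cl. apply existsb_exists. exists x; split; auto. apply in_seq; lia. }
    assert (Hnz : eta <> z) by (intros ->; congruence).
    eapply Un_cv_ext; [intros N; apply Rmult_assoc|].
    apply cv_mult_bounded with 1.
    + rewrite <- (closed x eta z); auto.
    + intros N HN. apply hit_bound; auto.
Qed.
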